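(* Fix $n\in\mathbb{N}$ and $\delta\in\mathbb{R}$. For $\mu\in\mathbb{N}=\{1,2,\dots\}$ let $S_\mu$ be the set of pairs $(p,z)\in\mathbb{R}^n\times\mathbb{R}^n$ with $\delta>-\min_{i,j}\{p_i,z_j\}$ such that $(p+\delta)^{\mu}\succ_w (z+\delta)^{\mu}$ and $\sum_{i=1}^n (p_i+\delta)^k\geq\sum_{i=1}^n (z_i+\delta)^k$ for all $k\in\{1,\dots,\mu-1\}$. If $\mu_2>\mu_1$, then $S_{\mu_1}\subseteq S_{\mu_2}$. Consequently, increasing $\mu$ enlarges the set of rational functions $H(s)=K\prod_{i=1}^n(s-z_i)/\prod_{i=1}^n(s-p_i)$, $K>0$, with real zeros and poles that are certified logarithmically completely monotonic by the condition $(p,z)\in S_\mu$.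
   Context: $(x+\delta)^\mu$ denotes the vector with components $(x_i+\delta)^\mu$. For $x\in\mathbb{R}^n$, $x^{\downarrow}$ is the vector of its components sorted in descending order; $x\succ_w y$ means $\sum_{i=1}^k x^{\downarrow}_i\geq\sum_{i=1}^k y^{\downarrow}_i$ for all $k=1,\dots,n$. (The condition $(p,z)\in S_\mu$ for some $\mu,\delta$ is a sufficient condition for $H$ to be logarithmically completely monotonic.) *)

(* Defs.v *)
From mathcomp Require Import all_boot all_order all_algebra.
From mathcomp Require Import reals.
Set Implicit Arguments. Unset Strict Implicit. Unset Printing Implicit Defensive.
Import Order.TTheory GRing.Theory Num.Theory.
Local Open Scope ring_scope.

Definition sort_desc (R : realType) (n : nat) (x : 'I_n -> R) : seq R :=
  sort (fun a b : R => b <= a) [seq x i | i <- enum 'I_n].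

Definition weakly_majorizes (R : realType) (n : nat) (x y : 'I_n -> R) : Prop :=
  forall k : nat, (1 <= k <= n)%N ->
    \sum_(i < k) (sort_desc y)`_i <= \sum_(i < k) (sort_desc x)`_i.

Definition shift_pow (R : realType) (n : nat) (x : 'I_n -> R) (delta : R) (mu : nat)
  : 'I_n -> R := fun i => (x i + delta) ^+ mu.

Definition delta_ok (R : realType) (n : nat) (delta : R) (p z : 'I_n -> R) : Prop :=
  forall i : 'I_n, - p i < delta /\ - z i < delta.

Definition S_mu (R : realType) (n : nat) (delta : R) (mu : nat) (p z : 'I_n -> R) : Prop :=
  [/\ delta_ok delta p z,
      weakly_majorizes (shift_pow p delta mu) (shift_pow z delta mu) &
      forall k : nat, (1 <= k <= mu.-1)%N ->
        \sum_(i < n) (z i + delta) ^+ k <= \sum_(i < n) (p i + delta) ^+ k].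

(* Main.v *)
Require Import Defs.
From mathcomp Require Import all_boot all_order all_algebra.
From mathcomp Require Import reals ring lra zify.
Set Implicit Arguments. Unset Strict Implicit.
Import Order.TTheory GRing.Theory Num.Theory.
Local Open Scope ring_scope.

Lemma L0 (R : realType) (a b : R) (k : nat) : 0 <= a -> 0 <= b ->
  0 <= (a - b) * (a ^+ k - b ^+ k).
Proof.
move=> a0 b0; case: (leP a b) => h.
- apply: mulr_le0; rewrite subr_le0 //.
  by apply: lerXn2r; rewrite // qualifE /=.
- apply: mulr_ge0; rewrite subr_ge0; first exact: ltW.
  by apply: lerXn2r; rewrite ?qualifE //= ltW.
Qed.

Lemma L1 (R : realType) (a b : R) (j m : nat) : 0 <= a -> 0 <= b -> (j <= m)%N ->
  a ^+ j * b ^+ (m - j) * (a - b) <= a ^+ m * (a - b).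
Proof.
move=> a0 b0 jm; rewrite -subr_ge0.
have -> : a ^+ m = a ^+ j * a ^+ (m - j) by rewrite -exprD subnKC.
have -> : a ^+ j * a ^+ (m - j) * (a - b) - a ^+ j * b ^+ (m - j) * (a - b)
   = a ^+ j * ((a - b) * (a ^+ (m - j) - b ^+ (m - j))) by ring.
by apply: mulr_ge0; [exact: exprn_ge0 | exact: L0].
Qed.

Lemma key_step (R : realType) (a b : R) (mu m : nat) : 0 <= a -> 0 <= b ->
  (1 <= mu)%N -> (mu <= m)%N ->
  b ^+ (m.+1 - mu) * (a ^+ mu - b ^+ mu) <= mu%:R * a ^+ m * (a - b).
Proof.
move=> a0 b0 mu1 mum.
have -> : mu%:R * a ^+ m * (a - b) = \sum_(i < mu) a ^+ m * (a - b).
  by rewrite sumr_const card_ord -mulr_natl; ring.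
rewrite subrXX mulr_sumr mulr_sumr.
apply: ler_sum => i _.
have im := ltn_ord i.
have -> : b ^+ (m.+1 - mu) * ((a - b) * (a ^+ (mu.-1 - i) * b ^+ i)) =
  a ^+ (mu.-1 - i) * (b ^+ i * b ^+ (m.+1 - mu)) * (a - b) by ring.
rewrite -exprD.
have -> : (i + (m.+1 - mu) = m - (mu.-1 - i))%N by lia.
apply: L1 => //; lia.
Qed.

Lemma poly_ineq (R : realType) (a b : R) (mu k : nat) : 0 <= a -> 0 <= b ->
  (1 <= mu)%N ->
  (mu + k)%:R * b ^+ k * (a ^+ mu - b ^+ mu) <= mu%:R * (a ^+ (mu + k) - b ^+ (mu + k)).
Proof.
move=> a0 b0 mu1; elim: k => [|k IH].
  by rewrite addn0 expr0 mulr1.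
have ks := key_step a0 b0 mu1 (leq_addr k mu).
have -> : (mu + k.+1)%N = (mu + k).+1 by rewrite addnS.
have e0 : ((mu + k).+1 - mu)%N = k.+1 by lia.
rewrite e0 in ks.
rewrite mulrSr exprS.
have IH' := ler_wpM2l b0 IH.
have e1 : ((mu + k)%:R + 1) * (b * b ^+ k) * (a ^+ mu - b ^+ mu) =
  b * ((mu + k)%:R * b ^+ k * (a ^+ mu - b ^+ mu)) + b ^+ k.+1 * (a ^+ mu - b ^+ mu)
  by rewrite exprS; ring.
rewrite e1.
have e2 : mu%:R * (a ^+ (mu + k).+1 - b ^+ (mu + k).+1) =
  b * (mu%:R * (a ^+ (mu + k) - b ^+ (mu + k))) + mu%:R * a ^+ (mu + k) * (a - b)
  by rewrite !exprS; ring.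
rewrite e2; exact: lerD.
Qed.
Lemma abel (R : realType) (c d : nat -> R) (N : nat) :
  (forall j, 0 <= c j) -> (forall j, c j.+1 <= c j) ->
  (forall j, (j <= N)%N -> 0 <= \sum_(i < j) d i) ->
  forall k, (k <= N)%N -> c k * \sum_(i < k) d i <= \sum_(i < k) c i * d i.
Proof.
move=> c0 cdec D0; elim => [|k IH] kN; first by rewrite !big_ord0 mulr0.
rewrite !big_ord_recr /=.
have h1 := IH (ltnW kN).
apply: le_trans (lerD h1 (lexx _)).
rewrite -mulrDr.
apply: ler_wpM2r; last exact: cdec.
by have := D0 k.+1 kN; rewrite big_ord_recr.
Qed.

Lemma seq_maj (R : realType) (A B : seq R) (n mu k : nat) : (1 <= mu)%N ->
  (forall j, 0 <= A`_j) -> (forall j, 0 <= B`_j) -> (forall j, B`_j.+1 <= B`_j) ->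
  (forall j, (j <= n)%N -> \sum_(i < j) B`_i ^+ mu <= \sum_(i < j) A`_i ^+ mu) ->
  forall j, (j <= n)%N -> \sum_(i < j) B`_i ^+ (mu + k) <= \sum_(i < j) A`_i ^+ (mu + k).
Proof.
move=> mu1 A0 B0 Bdec H j jn.
have c0 : forall i, 0 <= B`_i ^+ k by move=> i; exact: exprn_ge0.
have cdec : forall i, B`_i.+1 ^+ k <= B`_i ^+ k.
  by move=> i; apply: lerXn2r; rewrite ?qualifE /= ?B0 ?Bdec.
have D0 : forall i, (i <= n)%N -> 0 <= \sum_(l < i) (A`_l ^+ mu - B`_l ^+ mu).
  by move=> i iN; rewrite sumrB subr_ge0; apply: H.
have h := @abel R (fun i => B`_i ^+ k) (fun l => A`_l ^+ mu - B`_l ^+ mu) n c0 cdec D0 j jn.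
have h0 : 0 <= \sum_(i < j) B`_i ^+ k * (A`_i ^+ mu - B`_i ^+ mu).
  by apply: le_trans h; apply: mulr_ge0 => //; apply: D0.
have h1 : \sum_(i < j) (mu + k)%:R * B`_i ^+ k * (A`_i ^+ mu - B`_i ^+ mu)
   <= \sum_(i < j) mu%:R * (A`_i ^+ (mu + k) - B`_i ^+ (mu + k)).
  by apply: ler_sum => i _; apply: poly_ineq.
rewrite -mulr_sumr in h1.
have h2 : 0 <= mu%:R * \sum_(i < j) (A`_i ^+ (mu + k) - B`_i ^+ (mu + k)).
  apply: le_trans h1.
  have -> : \sum_(i < j) (mu + k)%:R * B`_i ^+ k * (A`_i ^+ mu - B`_i ^+ mu)
     = (mu + k)%:R * \sum_(i < j) B`_i ^+ k * (A`_i ^+ mu - B`_i ^+ mu).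
    by rewrite mulr_sumr; apply: eq_bigr => i _; rewrite mulrA.
  by apply: mulr_ge0.
rewrite pmulr_rge0 ?ltr0n // sumrB subr_ge0 in h2.
exact: h2.
Qed.

Definition geR (R : realType) := fun a b : R => b <= a.

Lemma geR_total (R : realType) : total (@geR R).
Proof. by move=> x y; rewrite /geR le_total. Qed.
Lemma geR_trans (R : realType) : transitive (@geR R).
Proof. by move=> x y z h1 h2; rewrite /geR; exact: le_trans h2 h1. Qed.
Lemma geR_anti (R : realType) : antisymmetric (@geR R).
Proof. by move=> x y; rewrite /geR => /andP[h1 h2]; apply/eqP; rewrite eq_le h1 h2. Qed.

Lemma sort_pow (R : realType) (s : seq R) (m : nat) : (forall x, x \in s -> 0 <= x) ->
  sort (@geR R) [seq x ^+ m | x <- s] = [seq x ^+ m | x <- sort (@geR R) s].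
Proof.
move=> s0; apply: (sorted_eq (@geR_trans R) (@geR_anti R)).
- exact: sort_sorted (@geR_total R) _.
- apply: (@homo_sorted_in _ _ [pred x | 0 <= x] _ (@geR R) (@geR R)).
  + move=> x y; rewrite !inE /geR => x0 y0 h /=; by apply: (@lerXn2r R m y x); [exact: y0 | exact: x0 | exact: h].
  + by apply/allP => x; rewrite mem_sort inE; apply: s0.
  + exact: sort_sorted (@geR_total R) _.
- have P1 := introT permPl (perm_sort (@geR R) [seq x ^+ m | x <- s]).
  have P2 := introT permPl (perm_sort (@geR R) s).
  apply: (perm_trans P1); apply: perm_map; by rewrite perm_sym.
Qed.

Lemma sorted_nth (R : realType) (s : seq R) : (forall x, x \in s -> 0 <= x) ->
  (forall j, 0 <= (sort (@geR R) s)`_j) /\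
  (forall j, (sort (@geR R) s)`_j.+1 <= (sort (@geR R) s)`_j).
Proof.
move=> s0.
have nn : forall j, 0 <= (sort (@geR R) s)`_j.
  move=> j; case: (ltnP j (size (sort (@geR R) s))) => h.
    by apply: s0; rewrite -(mem_sort (@geR R)); apply: mem_nth.
  by rewrite nth_default.
split => // j; case: (ltnP j.+1 (size (sort (@geR R) s))) => h.
  by have /(sortedP 0) := sort_sorted (@geR_total R) s; apply.
by rewrite [X in X <= _]nth_default.
Qed.

Lemma SD (R : realType) (n : nat) (delta : R) (x : 'I_n -> R) (m : nat) :
  (forall i, 0 <= x i + delta) ->
  sort_desc (shift_pow x delta m) =
  [seq y ^+ m | y <- sort (@geR R) [seq x i + delta | i <- enum 'I_n]].
Proof.
move=> x0; rewrite -sort_pow.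
  rewrite /sort_desc /shift_pow /geR; congr sort.
  by elim: (enum _) => //= a s ->.
by move=> y /mapP[i _ ->].
Qed.

Lemma sumE (R : realType) (n : nat) (delta : R) (x : 'I_n -> R) (m k : nat) :
  (forall i, 0 <= x i + delta) -> (k <= n)%N ->
  \sum_(i < k) (sort_desc (shift_pow x delta m))`_i =
  \sum_(i < k) (sort (@geR R) [seq x i + delta | i <- enum 'I_n])`_i ^+ m.
Proof.
move=> x0 kn; rewrite SD //; apply: eq_bigr => i _.
rewrite (nth_map 0) // size_sort size_map size_enum_ord.
have := ltn_ord i; lia.
Qed.

Lemma fullE (R : realType) (n : nat) (delta : R) (x : 'I_n -> R) (k : nat) :
  \sum_(i < n) (x i + delta) ^+ k =
  \sum_(i < n) (sort (@geR R) [seq x i + delta | i <- enum 'I_n])`_i ^+ k.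
Proof.
have sz : size (sort (@geR R) [seq x i + delta | i <- enum 'I_n]) = n.
  by rewrite size_sort size_map size_enum_ord.
have E : forall s : seq R, \sum_(i < size s) s`_i ^+ k = \sum_(y <- s) y ^+ k.
  by move=> s; rewrite (big_nth 0) big_mkord.
have := E (sort (@geR R) [seq x i + delta | i <- enum 'I_n]); rewrite sz => ->.
rewrite (perm_big _ (introT permPl (perm_sort (@geR R) _))).
by rewrite big_map big_enum.
Qed.

Theorem proposition4 (R : realType) (n : nat) (delta : R) (mu1 mu2 : nat) :
  (1 <= mu1)%N -> (mu1 < mu2)%N ->
  forall p z : 'I_n -> R, S_mu delta mu1 p z -> S_mu delta mu2 p z.
Proof.
move=> h1 h12 p z [dok wm ps].
have p0 : forall i, 0 <= p i + delta by move=> i; have [? ?] := dok i; lra.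
have z0 : forall i, 0 <= z i + delta by move=> i; have [? ?] := dok i; lra.
set A := sort (@geR R) [seq p i + delta | i <- enum 'I_n].
set B := sort (@geR R) [seq z i + delta | i <- enum 'I_n].
have [A0 _] : (forall j, 0 <= A`_j) /\ (forall j, A`_j.+1 <= A`_j).
  by apply: sorted_nth => y /mapP[i _ ->].
have [B0 Bdec] : (forall j, 0 <= B`_j) /\ (forall j, B`_j.+1 <= B`_j).
  by apply: sorted_nth => y /mapP[i _ ->].
have H : forall j, (j <= n)%N -> \sum_(i < j) B`_i ^+ mu1 <= \sum_(i < j) A`_i ^+ mu1.
  move=> [|j] jn; first by rewrite !big_ord0.
  by have := wm j.+1 jn; rewrite !sumE.
split => //.
- move=> k /andP[k1 kn]; rewrite !sumE //.
  have -> : mu2 = (mu1 + (mu2 - mu1))%N by lia.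
  rewrite -/A -/B. have := @seq_maj R A B n mu1 (mu2 - mu1) h1 A0 B0 Bdec H k kn. by [].
- move=> k /andP[k1 km]; case: (ltnP k mu1) => hk.
    apply: ps; apply/andP; split => //; lia.
  rewrite !fullE -/A -/B.
  have := @seq_maj R A B n mu1 (k - mu1) h1 A0 B0 Bdec H n (leqnn n).
  by rewrite subnKC.
Qed.
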